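(* Let $\kappa, m, n$ be positive integers such that $\kappa^4 m^4 n^4 - 32\kappa(m^2+n^2) = s^2$ for some integer $s$. Then \[ (\kappa m^2 - 2)(\kappa n^2 - 2) \leq 8. \] *)

(* Defs.v *)
From Stdlib Require Export ZArith Lia.

(* Main.v *)
Require Import Defs.
From Stdlib Require Import ZArith Lia.
Open Scope Z_scope.

Ltac enum v lo hi :=
  lazymatch eval compute in (Z.ltb lo hi) with
  | true => let lo' := eval compute in (lo + 1) in
            destruct (Z.eq_dec v lo) as [->|?]; [ | enum v lo' hi]
  | false => assert (v = lo) by lia; subst v
  end.

Lemma core (a b t x : Z) (ha : 3 <= a) (hab : a <= b) (ht : 1 <= t)
  (hta : t * a <= 32) (he : b * (a*t - 8) = 8*a + t*t) (hx : x*x = a*b) (hx0: 0 <= x) :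
  (a - 2) * (b - 2) <= 8.
Proof.
  assert (Ha : a <= 32) by nia.
  assert (Ht : t <= 10) by nia.
  assert (Hp : a*t - 8 >= 1) by nia.
  assert (Hb : b <= 8*a + t*t) by nia.
  (enum a 3 32; enum t 1 10; try lia).
  all: simpl in he; simpl in hx.
  all: destruct (Z_lt_ge_dec b 100) as [Hb1|Hb1]; try lia.
  all: (enum b 3 100; try lia).
  all: assert (x <= 30) by nia; enum x 0 30; lia.
Qed.


Lemma core2 (a b t x : Z) (ha : 1 <= a) (hab : a <= b) (ht : 1 <= t)
  (ht2 : 2 * t <= a * b) (he : t * (a * b) - t * t = 8 * (a + b))
  (hx : x*x = a*b) (hx0: 0 <= x) :
  (a - 2) * (b - 2) <= 8.
Proof.
  destruct (Z_lt_ge_dec a 3) as [Ha|Ha].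
  - assert (a = 1 \/ a = 2) as [-> | ->] by lia; lia.
  - apply (core a b t x); try lia.
    assert (t * (a * b) <= 16 * (a + b)) by nia. nia.
Qed.

Theorem lemma3 (kappa m n s : Z) (hk : 0 < kappa) (hm : 0 < m) (hn : 0 < n)
  (hs : kappa ^ 4 * m ^ 4 * n ^ 4 - 32 * kappa * (m ^ 2 + n ^ 2) = s ^ 2) :
  (kappa * m ^ 2 - 2) * (kappa * n ^ 2 - 2) <= 8.
Proof.
  set (a := kappa * m ^ 2). set (b := kappa * n ^ 2). set (x := kappa * m * n).
  assert (Ha : 1 <= a) by (unfold a; nia).
  assert (Hb : 1 <= b) by (unfold b; nia).
  assert (Hx0 : 0 <= x) by (unfold x; nia).
  assert (Hx : x * x = a * b) by (unfold x, a, b; ring).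
  set (P := a * b).
  assert (HP : P * P - 32 * (a + b) = Z.abs s * Z.abs s).
  { rewrite <- Z.abs_mul. replace (s * s) with (s ^ 2) by ring.
    rewrite <- hs, Z.abs_eq by nia. unfold P, a, b; ring. }
  set (s' := Z.abs s) in HP.
  assert (Hs0 : 0 <= s') by (unfold s'; lia).
  assert (HP1 : 1 <= P) by (unfold P; nia).
  assert (Hsl : s' < P) by nia.
  set (r := P - s').
  assert (Hr := Z.div_mod r 2 ltac:(lia)).
  assert (Hrm := Z.mod_pos_bound r 2 ltac:(lia)).
  set (t := r / 2) in *. set (e := r mod 2) in *.
  assert (He : e = 0).
  { assert (e = 0 \/ e = 1) as [|E] by lia; auto.
    exfalso. rewrite E in Hr. unfold r in Hr.
    assert (s' = P - 2 * t - 1) by lia. subst s'. clearbody t. nia. }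
  rewrite He in Hr.
  assert (Hs' : s' = P - 2 * t) by (unfold r in Hr; lia).
  rewrite Hs' in HP.
  assert (Ht1 : 1 <= t) by nia.
  assert (Ht2 : 2 * t <= a * b) by (fold P; lia).
  assert (Heq : t * (a * b) - t * t = 8 * (a + b)) by (fold P; nia).
  fold a b.
  destruct (Z_le_gt_dec a b).
  - apply (core2 a b t x); lia.
  - rewrite Z.mul_comm. apply (core2 b a t x); try lia; nia.
Qed.
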